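(* Fix a positive integer $k$ and let $a_n=\Gamma(k,n)$ for $n\ge 1$. (1) If $k$ is odd, then $(a_n)_{n\ge1}$ is periodic with period $k$, and among $a_1,\ldots,a_k$ the number of $1$'s is one more than the number of $2$'s. (2) If $k$ is even, then $(a_n)_{n\ge1}$ is periodic with period $2k$, and among $a_1,\ldots,a_{2k}$ the number of $1$'s is two more than the number of $2$'s.
   Context: For relatively prime positive integers $p,q$, exactly one of the equations $px+qy=\frac{(p-1)(q-1)}{2}$ (Equation 1) and $px+qy+1=\frac{(p-1)(q-1)}{2}$ (Equation 2) has a solution in nonnegative integers $(x,y)$. For positive integers $a,b$ with $d=\gcd(a,b)$, $\Gamma(a,b)=1$ if Equation 1 with $(p,q)=(a/d,b/d)$ has a nonnegative integer solution, and $\Gamma(a,b)=2$ otherwise. The period of a sequence $(a_n)_{n\ge1}$ is the smallest positive integer $T$ such that $a_n=a_{n+T}$ for all $n\ge 1$. *)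

(* Defs.v *)
From mathcomp Require Import all_boot.
From Stdlib Require Import ClassicalDescription.
Set Implicit Arguments. Unset Strict Implicit. Unset Printing Implicit Defensive.

(* Equation 1: p x + q y = (p-1)(q-1)/2 has a solution in nonnegative integers.
   For coprime p, q the product (p-1)(q-1) is even, so %/ 2 is exact. *)
Definition eq1_solvable (p q : nat) : Prop :=
  exists x y : nat, p * x + q * y = ((p - 1) * (q - 1)) %/ 2.

Definition Gamma (a b : nat) : nat :=
  let d := gcdn a b in
  if excluded_middle_informative (eq1_solvable (a %/ d) (b %/ d)) then 1 else 2.

Definition is_shift (u : nat -> nat) (T : nat) : Prop :=
  forall n, 1 <= n -> u n = u (n + T).

Definition is_period (u : nat -> nat) (T : nat) : Prop :=
  0 < T /\ is_shift u T /\ (forall T', 0 < T' -> is_shift u T' -> T <= T').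

(* Main.v *)
Require Import Defs.
From Stdlib Require Import ClassicalDescription.
From mathcomp Require Import all_boot all_order all_algebra zify ring.
Import Order.TTheory GRing.Theory Num.Theory.
Set Implicit Arguments. Unset Strict Implicit.
Local Open Scope ring_scope.
Definition Cz (p q N : int) := exists y t : int, 0 <= y /\ 2 * y + 1 < p /\ q * y = N + t * p.
Lemma Cz_shift (p q N m c : int) : Cz p q N <-> Cz p (q + m *  p) (N + c *  p).
Proof.
split=> -[y [t [y0 [yp e]]]].
  exists y, (t + m *  y - c); do 2!split=> //.
  by rewrite mulrDl e; ring.
exists y, (t - m *  y + c); do 2!split=> //.
have -> : q * y = (q + m * p) * y - m *  p* y by ring.
by rewrite e; ring.
Qed.

Lemma exist_y (p q N : int) (u v : int) : 0 < p -> u *  p + v *  q = 1 ->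
  exists y t, 0 <= y /\ y < p /\ q* y = N + t *  p.
Proof.
move=> p0 e.
exists ((v *  N) %% p)%Z, (- u *  N - q * ((v *  N) %/ p)%Z).
have pn0 : p != 0 by rewrite gt_eqF.
split; first exact: modz_ge0.
split; first exact: ltz_pmod.
have h := divz_eq (v *  N) p.
have -> : ((v * N) %% p)%Z = v *  N - ((v * N) %/ p)%Z * p by rewrite {2}h; ring.
have hv : v * q = 1 - u * p by rewrite -e; ring.
transitivity ((v *  q) * N - q * ((v * N) %/ p)%Z * p); first ring.
rewrite hv; ring.
Qed.

Lemma uniq_y (p q N : int) (u v : int) y1 y2 t1 t2 : u *  p + v *  q = 1 ->
  0 <= y1 -> y1 < p -> 0 <= y2 -> y2 < p ->
  q* y1 = N + t1 *  p -> q* y2 = N + t2 *  p -> y1 = y2.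
Proof.
move=> e a1 b1 a2 b2 e1 e2.
have : y1 - y2 = p * (u *  y1 - u *  y2 + v * t1 - v * t2).
  transitivity ((u *  p + v *  q) * (y1 - y2)); first by rewrite e; ring.
  transitivity (u *  p* (y1-y2) + v *  (q* y1) - v *  (q* y2)); first ring.
  rewrite e1 e2; ring.
set w := (_ - _ + _ - _).
move=> h.
have : w = 0 by nia.
move=> w0; move: h; rewrite w0 mulr0 => /eqP; rewrite subr_eq0 => /eqP //.
Qed.

Lemma char (p q N : nat) : (2 <= p)%N -> (0 < q)%N -> (2 * N = (p - 1) * (q - 1))%N ->
  (exists x y : nat, p * x + q * y = N)%N <-> Cz p q N.
Proof.
move=> p2 q0 hN; split.
  move=> [x [y e]]; exists y, (- x%:Z).
  have h : (2 * y + 1 < p)%N by nia.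
  split; first by [].
  split; first lia.
  lia.
move=> [y [t [a [b e]]]].
have t0 : t <= 0 by nia.
exists `|- t|%N, `|y|%N.
lia.
Qed.

Definition transfer (p q N q' N' : int) :=
  forall y t, q * y = N + t * p -> exists t', q' * (p - 1 - y) = N' + t' * p.

Lemma xor_gen (p q N q' N' u v : int) : 2 <= p -> u * p + v * q = 1 ->
  transfer p q N q' N' -> transfer p q' N' q N ->
  (forall y t, 2 * y + 1 = p -> q * y <> N + t * p) ->
  (Cz p q N <-> ~ Cz p q' N').
Proof.
move=> p2 e T1 T2 Hm.
have p0 : 0 < p by lia.
split.
  move=> [y1 [t1 [a1 [b1 e1]]]] [y2 [t2 [a2 [b2 e2]]]].
  have [t3 e3] := T2 _ _ e2.
  have h3 : 0 <= p - 1 - y2 by lia.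
  have h4 : p - 1 - y2 < p by lia.
  have h5 : y1 < p by lia.
  have := uniq_y e a1 h5 h3 h4 e1 e3.
  lia.
move=> nC.
have [y [t [a [b e1]]]] := exist_y N p0 e.
have [lt|ge] := ltP (2 * y + 1) p.
  by exists y, t.
have ne : 2 * y + 1 != p by apply/eqP => h; exact: (Hm y t h e1).
have [t' e'] := T1 _ _ e1.
exfalso; apply: nC; exists (p - 1 - y), t'; split; first lia.
split; [lia | done].
Qed.

Lemma transA (p q N q' N' a m : int) : p = 2 * a + 1 -> q' = m * p - q ->
  N = a * (q - 1) -> N' = a * (q' - 1) -> transfer p q N q' N'.
Proof.
move=> hp hq hN hN' y t e; exists (t + m * (p - 1 - y - a)).
have -> : q' * (p - 1 - y) = (q * y - N) + N' + m * p * (p - 1 - y - a).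
  rewrite hN hN' hq hp; ring.
rewrite e; ring.
Qed.

Lemma transB (p q N q' N' b : int) : q = 2 * b + 1 -> q' = 2 * p - q ->
  N = (p - 1) * b -> N' = (p - 1) * (p - b - 1) -> transfer p q N q' N'.
Proof.
move=> hq hq' hN hN' y t e; exists (t + (p - 1 - 2 * y)).
have -> : q' * (p - 1 - y) = (q * y - N) + N' + p * (p - 1 - 2 * y).
  rewrite hN hN' hq' hq; ring.
rewrite e; ring.
Qed.

Definition Nn (p q : nat) := (((p - 1) * (q - 1)) %/ 2)%N.

Lemma odd_or p q : coprime p q -> odd p || odd q.
Proof.
move=> c; apply/negPn/negP; rewrite negb_or => /andP [hp hq].
have : (2 %| gcdn p q)%N by rewrite dvdn_gcd !dvdn2 hp hq.
by rewrite (eqP c).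
Qed.

Lemma oddE {n : nat} : odd n -> n = (2 * n./2 + 1)%N.
Proof. move=> h; have := odd_double_half n; rewrite h -muln2; lia. Qed.
Lemma evenE {n : nat} : ~~ odd n -> n = (2 * n./2)%N.
Proof. move=> h; have := odd_double_half n; rewrite (negbTE h) -muln2; lia. Qed.

Lemma evenN {p q : nat} : coprime p q -> (2 * Nn p q = (p - 1) * (q - 1))%N.
Proof.
rewrite /Nn => /odd_or /orP [/oddE h | /oddE h].
  rewrite h; set a := p./2.
  have -> : ((2 * a + 1 - 1) * (q - 1) = 2 * (a * (q - 1)))%N by lia.
  by rewrite mulKn.
rewrite h; set a := q./2.
have -> : ((p - 1) * (2 * a + 1 - 1) = 2 * ((p - 1) * a))%N by lia.
by rewrite mulKn.
Qed.

Lemma eq1_iff {p q : nat} : (0 < p)%N -> (0 < q)%N -> coprime p q ->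
  eq1_solvable p q <-> (p = 1%N \/ Cz p q (Nn p q)).
Proof.
move=> p0 q0 c; have hN := evenN c.
have [p1|p2] := eqVneq p 1%N.
  split=> _; [by left|]. exists 0%N, 0%N; rewrite p1 /Nn; lia.
have p2' : (2 <= p)%N by lia.
rewrite /eq1_solvable (char p2' q0 hN); split; [by right | move=> [h|//]; by rewrite h in p2].
Qed.

Lemma eq1_shift p q m : (0 < p)%N -> (0 < q)%N -> coprime p q -> coprime p (q + m * p) ->
  (m = 2%N \/ (m = 1%N /\ odd p)) -> eq1_solvable p q <-> eq1_solvable p (q + m * p).
Proof.
move=> p0 q0 c c' hm.
have q0' : (0 < q + m * p)%N by lia.
rewrite (eq1_iff p0 q0 c) (eq1_iff p0 q0' c').
have hN := evenN c; have hN' := evenN c'.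
have [c0 hc] : exists c0 : nat, Nn p (q + m * p) = (Nn p q + c0 * p)%N.
  case: hm => [hm|[hm /oddE hp]].
    exists (p - 1)%N; move: hN hN'; rewrite hm; nia.
  exists p./2; move: hN hN'; rewrite hm mul1n.
  have e1 : (p - 1 = 2 * p./2)%N by lia.
  have e2 : (q + p - 1 = (q - 1) + p)%N by lia.
  rewrite e1 e2 mulnDr; lia.
have E1 : Posz (q + m * p) = q%:Z + m%:Z * p by lia.
have E2 : Posz (Nn p (q + m * p)) = (Nn p q)%:Z + c0%:Z * p by lia.
rewrite E1 E2 -Cz_shift; done.
Qed.

Lemma eq1_inv p q q' m : (2 <= p)%N -> (0 < q)%N -> (0 < q')%N -> (q + q' = m * p)%N ->
  coprime p q -> coprime p q' -> (odd p \/ m = 2%N) ->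
  eq1_solvable p q <-> ~ eq1_solvable p q'.
Proof.
move=> p2 q0 q'0 hs c c' hm.
have p0 : (0 < p)%N by lia.
have pn1 : p <> 1%N by lia.
rewrite (eq1_iff p0 q0 c) (eq1_iff p0 q'0 c').
have -> : forall P, (p = 1%N \/ P) <-> P by move=> P; split; [case|right].
have -> : forall P, (p = 1%N \/ P) <-> P by move=> P; split; [case|right].
have [u [v e]] := Bezoutz p q.
have e' : u * p + v * q = 1 by rewrite e /gcdz /= (eqP c).
have hN := evenN c; have hN' := evenN c'.
have p2i : 2 <= p%:Z by lia.
have [op|ep] := boolP (odd p).
  have hp := oddE op; set a := p./2 in hp.
  have hNa : (Nn p q = a * (q - 1))%N.
    move: hN; have -> : (p - 1 = 2 * a)%N by lia.
    rewrite -mulnA; lia.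
  have hNa' : (Nn p q' = a * (q' - 1))%N.
    move: hN'; have -> : (p - 1 = 2 * a)%N by lia.
    rewrite -mulnA; lia.
  have I1 : p%:Z = 2 * a%:Z + 1 by lia.
  have I2 : q'%:Z = m%:Z * p%:Z - q%:Z by lia.
  have I2' : q%:Z = m%:Z * p%:Z - q'%:Z by lia.
  have I3 : (Nn p q)%:Z = a%:Z * (q%:Z - 1) by rewrite hNa PoszM; congr (_ * _); lia.
  have I4 : (Nn p q')%:Z = a%:Z * (q'%:Z - 1) by rewrite hNa' PoszM; congr (_ * _); lia.
  apply: (xor_gen p2i e' (transA I1 I2 I3 I4) (transA I1 I2' I4 I3)).
  move=> y t hy; rewrite I3 => h.
  have hya : y = a%:Z by lia.
  rewrite hya in h.
  have : a%:Z = t * p by rewrite mulrBr mulr1 in h; lia.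
  move=> hat.
  have ha1 : 1 <= a%:Z by lia.
  have ha2 : a%:Z < p by lia.
  have [t0|t1] := lerP t 0.
    have : t * p <= 0 by rewrite mulr_le0_ge0 //; lia.
    lia.
  have : p%:Z <= t * p%:Z by rewrite ler_peMl //; lia.
  lia.
have m2 : m = 2%N by case: hm => // h; rewrite h in ep.
have oq : odd q by have := odd_or c; rewrite (negbTE ep).
have hq := oddE oq; set b := q./2 in hq.
have hNb : (Nn p q = (p - 1) * b)%N.
  move: hN; have -> : (q - 1 = 2 * b)%N by lia.
  rewrite mulnCA; lia.
have hNb' : (Nn p q' = (p - 1) * (p - b - 1))%N.
  move: hN'; have -> : (q' - 1 = 2 * (p - b - 1))%N by lia.
  rewrite mulnCA; lia.
have J1 : q%:Z = 2 * b%:Z + 1 by lia.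
have J1' : q'%:Z = 2 * (p%:Z - b%:Z - 1) + 1 by lia.
have J2 : q'%:Z = 2 * p%:Z - q%:Z by lia.
have J2' : q%:Z = 2 * p%:Z - q'%:Z by lia.
have J3 : (Nn p q)%:Z = (p%:Z - 1) * b%:Z by rewrite hNb PoszM; congr (_ * _); lia.
have J4 : (Nn p q')%:Z = (p%:Z - 1) * (p%:Z - b%:Z - 1) by rewrite hNb' PoszM; congr (_ * _); lia.
have J3' : (Nn p q)%:Z = (p%:Z - 1) * (p%:Z - (p%:Z - b%:Z - 1) - 1) by rewrite J3; ring.
apply: (xor_gen p2i e' (transB J1 J2 J3 J4) (transB J1' J2' J4 J3')).
have hp := evenE ep.
move=> y t hy; lia.
Qed.

Local Close Scope ring_scope.
Lemma Gamma_def k n : Gamma k n = (if excluded_middle_informative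
   (eq1_solvable (k %/ gcdn k n) (n %/ gcdn k n)) then 1 else 2)%N.
Proof. by []. Qed.

Lemma Gamma_iff k n n' : gcdn k n = gcdn k n' ->
  (eq1_solvable (k %/ gcdn k n) (n %/ gcdn k n) <-> eq1_solvable (k %/ gcdn k n') (n' %/ gcdn k n')) ->
  Gamma k n = Gamma k n'.
Proof.
move=> _ h; rewrite !Gamma_def.
case: excluded_middle_informative => a; case: excluded_middle_informative => b //.
- by case: b; apply: (proj1 h a).
- by case: a; apply: (proj2 h b).
Qed.

Lemma Gamma_xor k n n' :
  (eq1_solvable (k %/ gcdn k n) (n %/ gcdn k n) <-> ~ eq1_solvable (k %/ gcdn k n') (n' %/ gcdn k n')) ->
  ((Gamma k n == 1) + (Gamma k n' == 1) = 1)%N.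
Proof.
move=> h; rewrite !Gamma_def.
case: excluded_middle_informative => a; case: excluded_middle_informative => b //.
- by exfalso; apply: (proj1 h a b).
- by exfalso; apply: a; apply: (proj2 h b).
Qed.

Lemma Gamma12 k n : ((Gamma k n == 1) + (Gamma k n == 2) = 1)%N.
Proof. by rewrite Gamma_def; case: excluded_middle_informative. Qed.

Lemma Gamma_p1 k n : (0 < k)%N -> gcdn k n = k -> Gamma k n = 1%N.
Proof.
move=> k0 g; rewrite Gamma_def g divnn k0.
case: excluded_middle_informative => // hh; exfalso; apply: hh.
by exists 0%N, 0%N; rewrite !muln0.
Qed.

Section Setup.
Variables (k n : nat).
Hypotheses (k0 : (0 < k)%N) (n0 : (0 < n)%N).
Let d := gcdn k n.
Lemma d_gt0 : (0 < d)%N. Proof. by rewrite gcdn_gt0 k0. Qed.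
Lemma kE : k = (k %/ d * d)%N. Proof. by rewrite divnK // dvdn_gcdl. Qed.
Lemma nE : n = (n %/ d * d)%N. Proof. by rewrite divnK // dvdn_gcdr. Qed.
Lemma p_gt0 : (0 < k %/ d)%N. Proof. have := kE; have := d_gt0; nia. Qed.
Lemma q_gt0 : (0 < n %/ d)%N. Proof. have := nE; have := d_gt0; nia. Qed.
Lemma cop : coprime (k %/ d) (n %/ d).
Proof.
have h : (gcdn (k %/ d) (n %/ d) * d = d)%N by rewrite muln_gcdl -kE -nE.
rewrite /coprime; apply/eqP; have := d_gt0; nia.
Qed.
End Setup.

Lemma Gamma_shift k n m : (0 < k)%N -> (0 < n)%N -> (m = 2%N \/ (m = 1%N /\ odd k)) ->
  Gamma k (n + m * k) = Gamma k n.
Proof.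
move=> k0 n0 hm.
have n0' : (0 < n + m * k)%N by lia.
have g : gcdn k (n + m * k) = gcdn k n by rewrite addnC gcdnMDl.
have c' := cop k0 n0'.
symmetry; apply: Gamma_iff; first by rewrite g.
rewrite g in c' *.
have hd : ((n + m * k) %/ gcdn k n = n %/ gcdn k n + m * (k %/ gcdn k n))%N.
  by rewrite divnDl ?dvdn_gcdr // muln_divA // dvdn_gcdl.
rewrite hd in c' *.
apply: eq1_shift => //; [exact: p_gt0 k0 n0 | exact: q_gt0 k0 n0 | exact: cop k0 n0 |].
case: hm => [->|[-> ok]]; [by left | right; split=> //].
move: ok; rewrite {1}(kE k n) oddM; by case/andP.
Qed.

Lemma gcd_compl k a b c : (a + b = c * k)%N -> gcdn k a = gcdn k b.
Proof.
move=> e.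
have hk : forall g, (g %| k)%N -> (g %| a)%N = (g %| b)%N.
  move=> g gk; have hab : (g %| a + b)%N by rewrite e dvdn_mull.
  apply/idP/idP => h.
    by rewrite (dvdn_addr _ h) in hab.
  by rewrite (dvdn_addl _ h) in hab.
apply/eqP; rewrite eqn_dvd !dvdn_gcd !dvdn_gcdl /=.
by rewrite -(hk _ (dvdn_gcdl _ _)) dvdn_gcdr (hk _ (dvdn_gcdl _ _)) dvdn_gcdr.
Qed.

Lemma Gamma_inv k n m : (0 < k)%N -> (0 < n)%N -> (n < m * k)%N ->
  ((m = 1%N /\ odd k) \/ (m = 2%N /\ n <> k)) ->
  ((Gamma k n == 1) + (Gamma k (m * k - n) == 1) = 1)%N.
Proof.
move=> k0 n0 nlt hm.
have n'0 : (0 < m * k - n)%N by lia.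
have e : (n + (m * k - n) = m * k)%N by lia.
have g := gcd_compl e.
apply: Gamma_xor.
have c := cop k0 n0; have c' := cop k0 n'0.
have q0 := q_gt0 k0 n0; have q'0 := q_gt0 k0 n'0.
have hk := kE k n; have hn := nE k n; have hn' := nE k (m * k - n).
rewrite -g in c' q'0 hn' *.
set d := gcdn k n in c c' q0 q'0 hk hn hn' *.
set p := (k %/ d)%N in c c' q0 q'0 hk hn hn' *.
set q := (n %/ d)%N in c c' q0 q'0 hk hn hn' *.
set q' := ((m * k - n) %/ d)%N in c c' q0 q'0 hk hn hn' *.
have d0 : (0 < d)%N by rewrite gcdn_gt0 k0.
have hq : (q + q' = m * p)%N.
  have : ((q + q') * d = (m * p) * d)%N by rewrite mulnDl -hn -hn' -mulnA -hk.
  by move/eqP; rewrite eqn_pmul2r // => /eqP.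
have p2 : (2 <= p)%N.
  have p0 : (0 < p)%N by have := k0; rewrite hk; case: (p) => //.
  case: (leqP 2 p) => // hp1.
  have p1 : p = 1%N by lia.
  rewrite p1 mul1n in hk.
  rewrite -hk in hn.
  case: hm => [[hm _]|[hm hnk]]; subst m; nia.
apply: (eq1_inv p2 q0 q'0 hq c c').
case: hm => [[hm ok]|[hm _]]; [left | by right].
by move: ok; rewrite hk oddM => /andP [].
Qed.

Lemma count_pair (s : seq nat) (P Q R T : pred nat) :
  {in s, forall x, P x + Q x = R x + T x} ->
  count P s + count Q s = count R s + count T s.
Proof.
elim: s => //= x s IH h.
have := h x (mem_head _ _).
have := IH (fun y hy => h y (mem_behead (s:=x :: s) hy)).
lia.
Qed.

Lemma count_refl M (P : pred nat) :
  count P (iota 1 M.-1) = count (fun n => P (M - n)) (iota 1 M.-1).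
Proof.
set s := iota 1 M.-1.
have -> : count (fun n => P (M - n)) s = count P (map (fun n => M - n) s) by rewrite count_map.
suff /permP h : perm_eq s (map (fun n => M - n) s) by apply: h.
apply: uniq_perm.
- exact: iota_uniq.
- rewrite map_inj_in_uniq ?iota_uniq // => x y; rewrite !mem_iota; lia.
- move=> x; apply/idP/mapP.
    move=> hx; exists (M - x); last by move: hx; rewrite mem_iota; lia.
    by move: hx; rewrite !mem_iota; lia.
  by move=> [y hy ->]; move: hy; rewrite !mem_iota; lia.
Qed.

Lemma shift_mul (u : nat -> nat) g : is_shift u g -> forall j n, 1 <= n -> u (n + j * g) = u n.
Proof.
move=> h; elim=> [|j IH] n n1; first by rewrite mul0n addn0.
rewrite mulSn addnA IH; [by rewrite -h | lia].
Qed.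

Lemma count_blocks (u : nat -> nat) g c j : is_shift u g ->
  count (fun n => u n == c) (iota 1 (j * g)) = j * count (fun n => u n == c) (iota 1 g).
Proof.
move=> h; elim: j => [|j IH]; first by rewrite mul0n.
rewrite mulSnr iotaD count_cat IH mulSnr; congr (_ + _).
rewrite addnC iotaDl count_map; apply: eq_in_count => n; rewrite mem_iota => hn /=.
rewrite addnC shift_mul //; lia.
Qed.

Lemma shift_sub (u : nat -> nat) a b : a < b -> is_shift u a -> is_shift u b -> is_shift u (b - a).
Proof.
move=> ab ha hb n n1.
rewrite (ha (n + (b - a))); last lia.
have -> : n + (b - a) + a = n + b by lia.
by rewrite -hb.
Qed.

Lemma shift_gcd (u : nat -> nat) : forall N a b, a + b <= N -> 0 < a -> 0 < b ->
  is_shift u a -> is_shift u b -> is_shift u (gcdn a b).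
Proof.
elim=> [|N IH] a b hN a0 b0 ha hb; first lia.
case: (ltngtP a b) => hab.
- have e : gcdn a b = gcdn a (b - a) by rewrite -{1}(subnK (ltnW hab)) gcdnDr.
  rewrite e; apply: IH => //; [lia | lia | exact: shift_sub].
- have e : gcdn a b = gcdn (a - b) b.
    by rewrite gcdnC -{1}(subnK (ltnW hab)) gcdnDr gcdnC.
  rewrite e; apply: IH => //; [lia | lia | exact: shift_sub].
- by rewrite hab gcdnn.
Qed.

Lemma min_period (u : nat -> nat) T : 0 < T -> is_shift u T ->
  (forall g, 0 < g -> g < T -> g %| T -> is_shift u g -> False) -> is_period u T.
Proof.
move=> T0 hT H; split=> //; split=> // T' T'0 hT'.
case: (leqP T T') => // lt.
have hg := shift_gcd (leqnn (T' + T)) T'0 T0 hT' hT.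
exfalso; apply: (H (gcdn T' T)) => //.
- by rewrite gcdn_gt0 T'0.
- by apply: leq_ltn_trans lt; apply: dvdn_leq => //; apply: dvdn_gcdl.
- exact: dvdn_gcdr.
Qed.

Local Open Scope ring_scope.
Lemma Gamma_1 k : Gamma k 1 = 1%N.
Proof.
rewrite Gamma_def gcdn1 !divn1.
case: excluded_middle_informative => // hh; exfalso; apply: hh.
by exists 0%N, 0%N; rewrite subnn !muln0.
Qed.

Lemma Gamma_k1 k : (0 < k)%N -> ~~ odd k -> Gamma k (k + 1) = 2%N.
Proof.
move=> k0 ek.
rewrite Gamma_def gcdnDl gcdn1 !divn1.
case: excluded_middle_informative => // hh; exfalso.
have c : coprime k (k + 1) by rewrite /coprime gcdnDl gcdn1.
have q0 : (0 < k + 1)%N by lia.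
have := proj1 (eq1_iff k0 q0 c) hh.
have hk := evenE ek; set c0 := k./2 in hk.
move=> [k1|[y [t [y0 [yk e]]]]]; first by rewrite k1 in ek.
have hN := evenN c.
have hN2 : (Nn k (k + 1) = (2 * c0 - 1) * c0)%N.
  move: hN; have -> : (k + 1 - 1 = 2 * c0)%N by lia.
  have -> : (k - 1 = 2 * c0 - 1)%N by lia.
  rewrite mulnCA; lia.
have E1 : (Nn k (k + 1))%:Z = (2 * c0%:Z - 1) * c0%:Z.
  by rewrite hN2 PoszM; congr (_ * _); lia.
rewrite E1 in e.
have Ek : k%:Z = 2 * c0%:Z by lia.
have Ek1 : (k + 1)%:Z = 2 * c0%:Z + 1 by lia.
rewrite Ek1 Ek in e.
have hw : y + c0%:Z = 2 * c0%:Z * (t - y + c0%:Z) by nia.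
have c1 : 1 <= c0%:Z by lia.
have yc : y < c0%:Z by lia.
have [w0|w1] := lerP (t - y + c0%:Z) 0.
  have : 2 * c0%:Z * (t - y + c0%:Z) <= 0 by rewrite mulr_ge0_le0 //; lia.
  lia.
have : 2 * c0%:Z <= 2 * c0%:Z * (t - y + c0%:Z) by rewrite ler_peMr //; lia.
lia.
Qed.

Local Close Scope ring_scope.
Unset Implicit Arguments.
Lemma iota_last k : 0 < k -> iota 1 k = iota 1 k.-1 ++ [:: k].
Proof. by case: k => // n _; have := iotaD 1 n 1; rewrite addn1 add1n /= => ->. Qed.

Lemma count_tot k s : count (fun n => Gamma k n == 1) s + count (fun n => Gamma k n == 2) s = size s.
Proof.
rewrite -(count_predT s).
have := @count_pair s (fun n => Gamma k n == 1) (fun n => Gamma k n == 2) predT pred0.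
rewrite count_pred0 addn0; apply=> x _ /=; by rewrite Gamma12.
Qed.

Lemma odd_counts k : 0 < k -> odd k ->
  count (fun n => Gamma k n == 1) (iota 1 k) =
       (count (fun n => Gamma k n == 2) (iota 1 k)).+1.
Proof.
move=> k0 ok.
set S := iota 1 k.-1.
have hp : count (fun n => Gamma k n == 1) S + count (fun n => Gamma k (k - n) == 1) S
   = count predT S + count pred0 S.
  apply: count_pair => x; rewrite mem_iota => hx.
  have := Gamma_inv (m := 1) k0 (_ : 0 < x) (_ : x < 1 * k) (or_introl (conj erefl ok)).
  rewrite mul1n /= => ->; [by [] | lia | lia].
have hr := count_refl k (fun n => Gamma k n == 1).
rewrite -/S -hr count_pred0 count_predT size_iota in hp.
have ht := count_tot k S; rewrite size_iota in ht.
have hk : Gamma k k = 1 by apply: Gamma_p1 => //; rewrite gcdnn.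
rewrite iota_last // !count_cat /= hk /=.
rewrite /S in hp ht; lia.
Qed.

Lemma even_counts k : 0 < k -> ~~ odd k ->
  count (fun n => Gamma k n == 1) (iota 1 (2 * k)) =
       (count (fun n => Gamma k n == 2) (iota 1 (2 * k))).+2.
Proof.
move=> k0 ek.
set S := iota 1 (2 * k).-1.
have hk : Gamma k k = 1 by apply: Gamma_p1 => //; rewrite gcdnn.
have hp : count (fun n => Gamma k n == 1) S + count (fun n => Gamma k (2 * k - n) == 1) S
   = count predT S + count (pred1 k) S.
  apply: count_pair => x; rewrite mem_iota => hx.
  case: (eqVneq x k) => [->|hxk].
    by rewrite /= hk (_ : 2 * k - k = k) ?hk //; lia.
  have := Gamma_inv (m := 2) k0 (_ : 0 < x) (_ : x < 2 * k) (or_intror (conj erefl (elimN eqP hxk))).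
  rewrite /= (negbTE hxk) => ->; [by [] | lia | lia].
have hr := count_refl (2 * k) (fun n => Gamma k n == 1).
rewrite -/S -hr count_predT size_iota in hp.
have h1 : count (pred1 k) S = 1.
  rewrite (count_uniq_mem _ (iota_uniq _ _)) mem_iota; apply/eqP; rewrite eqb1; lia.
rewrite h1 in hp.
have ht := count_tot k S; rewrite size_iota in ht.
have h2k : Gamma k (2 * k) = 1 by apply: Gamma_p1 => //; rewrite -(addn0 (2 * k)) gcdnMDl gcdn0.
rewrite iota_last ?muln_gt0 // !count_cat /= h2k /=.
rewrite /S in hp ht; lia.
Qed.

Lemma jlem j a b r : 0 < r -> r < j -> j * a = j * b + r -> False.
Proof.
move=> r0 rj e; case: (leqP a b) => h.
  by have := leq_mul (leqnn j) h; lia.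
by have := leq_mul (leqnn j) h; rewrite mulnS; lia.
Qed.

Theorem theorem1p8 (k : nat) (hk : 0 < k) :
  (odd k ->
     is_period (fun n => Gamma k n) k /\
     count (fun n => Gamma k n == 1) (iota 1 k) =
       (count (fun n => Gamma k n == 2) (iota 1 k)).+1) /\
  (~~ odd k ->
     is_period (fun n => Gamma k n) (2 * k) /\
     count (fun n => Gamma k n == 1) (iota 1 (2 * k)) =
       (count (fun n => Gamma k n == 2) (iota 1 (2 * k))).+2).
Proof.
split=> [ok|ek].
  have hc := @odd_counts k hk ok.
  split=> //; apply: min_period => //.
    move=> n n1; have := @Gamma_shift k n 1 hk n1 (or_intror (conj erefl ok)).
    by rewrite mul1n => ->.
  move=> g g0 gk gd hg.
  have hkj : k = k %/ g * g by rewrite divnK.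
  have h1 := count_blocks 1 (k %/ g) hg.
  have h2 := count_blocks 2 (k %/ g) hg.
  rewrite -hkj in h1 h2.
  rewrite h1 h2 in hc.
  have j2 : 2 <= k %/ g by nia.
  exact: (@jlem _ _ _ 1 isT j2 (etrans hc (esym (addn1 _)))).
have hc := @even_counts k hk ek.
have k2 : 0 < 2 * k by lia.
split=> //; apply: min_period => //.
  move=> n n1; have := @Gamma_shift k n 2 hk n1 (or_introl erefl).
  by move=> ->.
move=> g g0 gk gd hg.
have hkj : 2 * k = (2 * k) %/ g * g by rewrite divnK.
have h1 := count_blocks 1 ((2 * k) %/ g) hg.
have h2 := count_blocks 2 ((2 * k) %/ g) hg.
rewrite -hkj in h1 h2.
rewrite h1 h2 in hc.
have j2 : 2 <= (2 * k) %/ g by nia.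
have j3 : (2 * k) %/ g = 2.
  case: (ltngtP ((2 * k) %/ g) 2) => // hj; [lia | exfalso; exact: (@jlem _ _ _ 2 isT hj (etrans hc (esym (addn2 _))))].
have gk' : g = k by nia.
rewrite gk' in hg.
have := hg 1 (leqnn 1).
by rewrite Gamma_1 addnC Gamma_k1.
Qed.
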